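(* For $i\in\{1,2\}$ let $(\mathcal B_{i,\mathbb R},\mathcal S_i,e_i,m_i)$ be as in the context with the same constant $\kappa$. Let $A\in L(\mathcal B_{1,\mathbb R},\mathcal B_{2,\mathbb R})$ with $A(\mathcal C_{1,\mathbb R})\subset\mathcal C_{2,\mathbb R}$ and $\Delta_{\mathbb R}:=\operatorname{diam}_{d_H}(A(\mathcal C_{1,\mathbb R}))<\infty$, and extend $A$ complex-linearly to $\mathcal B_{1,\mathbb C}\to\mathcal B_{2,\mathbb C}$. Then \[\Delta_{\mathbb C}:=\operatorname{diam}_{\delta_{\mathcal C_{2,\mathbb C}}}(A(\mathcal C_{1,\mathbb C}))\le8\Delta_{\mathbb R}+2\ln[3\sqrt2\kappa^{-2}].\]
   Context: Cone setting. $V$ is a real topological vector space, $\mathcal S\subset V'$ a set of linear functionals such that $\ell(x)=0$ for all $\ell\in\mathcal S$ implies $x=0$, $C_{\mathbb R}=\{h\in V\setminus\{0\}:\ell(h)\ge0\ \forall\ell\in\mathcal S\}$, and $e\in C_{\mathbb R}$ such that for every $h\in V$ some $\lambda\ge0$ has $\lambda e-h\in C_{\mathbb R}$. Norm $\|h\|=\inf\{\lambda\ge0:\ell(\lambda e\pm h)\ge0\ \forall\ell\in\mathcal S\}$; $\mathcal B_{\mathbb R}$ the completion; $\mathcal C_{\mathbb R}=\{h\in\mathcal B_{\mathbb R}\setminus\{0\}:\ell(h)\ge0\ \forall\ell\in\mathcal S\}$. $\mathcal S_*$ is the weak-$*$ closure of the convex hull of $\{\lambda\ell:\lambda>0,\ell\in\mathcal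 S\}$; there are $m\in\mathcal S_*$, $\kappa\in(0,1)$ with $m(e)=1$ and $m(h)\ge\kappa\|h\|$ on $\mathcal C_{\mathbb R}$. Hilbert metric on $\mathcal C_{\mathbb R}$: $d_H(h,g)=\ln(\beta/\alpha)$, $\alpha=\sup\{\lambda>0:g-\lambda h\in\mathcal C_{\mathbb R}\}$, $\beta=\inf\{\mu>0:\mu h-g\in\mathcal C_{\mathbb R}\}$. $\mathcal B_{\mathbb C}$ is the complexification (norm $\sup_\theta(\|\Re(e^{i\theta}(x+iy))\|^2+\|\Im(e^{i\theta}(x+iy))\|^2)^{1/2}$), real functionals extended complex-linearly. $\mathcal C_{\mathbb C}=\{z(x+iy):z\ne0,x,y\in\mathcal C_{\mathbb R}\}$, $\mathcal C'_{\mathbb C}=\{\ell\in\mathcal B'_{\mathbb C}:\ell(h)\ne0\ \forall h\in\mathcal C_{\mathbb C}\}$, $E(h,g)=\{\ell(h)/\ell(g):\ell\in\mathcal C'_{\mathbb C}\}$, $\delta_{\mathcal C}(h,g)=\ln\frac{\sup_{E(h,g)}|z|}{\inf_{E(h,g)}|z|}$; diameters in $\mathcal C_{\mathbb C}$ are w.r.t. $\delta_{\mathcal C}$. Objects of the $i$-th space carry index $i$. *)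

(* Defs.v *)
From HB Require Import structures.
From mathcomp Require Import all_boot all_order all_algebra.
From mathcomp Require Import all_classical all_reals all_analysis.
From mathcomp Require Import complex.

Set Implicit Arguments.
Unset Strict Implicit.
Unset Printing Implicit Defensive.

Import Order.TTheory GRing.Theory Num.Theory.
Import numFieldNormedType.Exports.
Local Open Scope classical_set_scope.
Local Open Scope ring_scope.

Section ConeDefs.
Variable R : realType.

Section Real.
Variable B : normedModType R.

Definition is_linear (W : lmodType R) (f : B -> W) :=
  forall (a : R) (x y : B), f (a *: x + y) = a *: f x + f y.

Definition coneR (S : set (B -> R)) : set B :=
  [set h | h <> 0 /\ forall l, S l -> 0 <= l h].

(* m belongs to S_* : the weak-* closure (topology of pointwise convergence
   on the points of V) of the convex hull of {lambda l : lambda > 0, l in S},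
   i.e. of the set of finite positive combinations of elements of S. *)
Definition in_Sstar (D : set B) (S : set (B -> R)) (m : B -> R) :=
  forall (xs : seq B) (eps : R), 0 < eps -> (forall x, x \in xs -> D x) ->
  exists (cl : seq (R * (B -> R))),
    [/\ cl != [::], (forall p, p \in cl -> 0 < p.1 /\ S p.2) &
        forall x, x \in xs ->
          `| m x - \sum_(p <- cl) p.1 * p.2 x | < eps].

(* The cone setting.  [D] is (the image of) V inside its completion B,
   the functionals of S are (the continuous extensions to B of) the
   elements of S, e is the order unit, m and kappa as in the context. *)
Definition cone_setting (D : set B) (S : set (B -> R)) (e : B)
    (m : B -> R) (kappa : R) : Prop :=
  (D 0 /\ (forall (a : R) x y, D x -> D y -> D (a *: x + y))) /\
  closure D = setT /\
  (forall l, S l -> is_linear (l : B -> R^o) /\ continuous l) /\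
  (forall x, D x -> (forall l, S l -> l x = 0) -> x = 0) /\
  (D e /\ coneR S e /\
   (forall h, D h -> exists lam : R, 0 <= lam /\ coneR S (lam *: e - h))) /\
  (forall h, D h -> `|h| = inf [set lam : R | 0 <= lam /\
      forall l, S l -> 0 <= l (lam *: e + h) /\ 0 <= l (lam *: e - h)]) /\
  [/\ in_Sstar D S m, is_linear (m : B -> R^o), continuous m,
      m e = 1 & forall h, coneR S h -> kappa * `|h| <= m h] /\
  (0 < kappa /\ kappa < 1).

Definition hilbert_dist (S : set (B -> R)) (h g : B) : \bar R :=
  let a := ereal_sup [set lam%:E | lam in
             [set lam : R | 0 < lam /\ coneR S (g - lam *: h)]] in
  let b := ereal_inf [set mu%:E | mu in
             [set mu : R | 0 < mu /\ coneR S (mu *: h - g)]] in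
  match a, b with
  | EFin a', EFin b' => if 0 < a' then (ln (b' / a'))%:E else +oo%E
  | _, _ => +oo%E
  end.

End Real.

Definition ediam (T : Type) (d : T -> T -> \bar R) (X : set T) : \bar R :=
  ereal_sup [set d h g | h in X & g in X].

Section Complex.
Variable B : normedModType R.
Local Open Scope complex_scope.

(* B_C = B x B, the pair (x, y) standing for x + i y *)
Definition cmod (z : R[i]) : R := Num.sqrt (complex.Re z ^+ 2 + complex.Im z ^+ 2).

(* complex scalar multiplication: (a + i b)(x + i y) *)
Definition cscale (z : R[i]) (p : B * B) : B * B :=
  (complex.Re z *: p.1 - complex.Im z *: p.2, complex.Im z *: p.1 + complex.Re z *: p.2).

Definition cnorm (p : B * B) : R :=
  sup [set Num.sqrt (`| cos t *: p.1 - sin t *: p.2 | ^+ 2 +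
                     `| sin t *: p.1 + cos t *: p.2 | ^+ 2) | t in [set: R]].

(* B'_C : continuous (= bounded) complex-linear functionals on B_C *)
Definition cdual (l : B * B -> R[i]) : Prop :=
  [/\ forall p q, l (p.1 + q.1, p.2 + q.2) = l p + l q,
      forall z p, l (cscale z p) = z * l p &
      exists M : R, forall p, cmod (l p) <= M * cnorm p].

Definition coneC (S : set (B -> R)) : set (B * B) :=
  [set p | exists (z : R[i]) (x y : B),
     [/\ z != 0, coneR S x, coneR S y & p = cscale z (x, y)]].

Definition cone_dual (S : set (B -> R)) : set (B * B -> R[i]) :=
  [set l | cdual l /\ forall h, coneC S h -> l h != 0].

Definition Eset (S : set (B -> R)) (h g : B * B) : set R[i] :=
  [set l h / l g | l in cone_dual S].

Definition delta_C (S : set (B -> R)) (h g : B * B) : \bar R :=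
  let s := ereal_sup [set (cmod z)%:E | z in Eset S h g] in
  let i := ereal_inf [set (cmod z)%:E | z in Eset S h g] in
  match s, i with
  | EFin s', EFin i' => if 0 < i' then (ln (s' / i'))%:E else +oo%E
  | _, _ => +oo%E
  end.

End Complex.

Definition complexify (B1 B2 : normedModType R) (A : B1 -> B2)
  (p : B1 * B1) : B2 * B2 := (A p.1, A p.2).

End ConeDefs.

(* Main.v *)
Require Import Defs.
From HB Require Import structures.
From mathcomp Require Import all_boot all_order all_algebra.
From mathcomp Require Import all_classical all_reals all_analysis.
From mathcomp Require Import complex.
From mathcomp Require Import ring lra.
Import Order.TTheory GRing.Theory Num.Theory.
Import numFieldNormedType.Exports.
Local Open Scope classical_set_scope.
Local Open Scope ring_scope.


Lemma ratio_set_le (R : realType) (T : Type) (Y : set T) (F : T -> R) (M : R) :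
  Y !=set0 -> (forall z, Y z -> 0 < F z) ->
  (forall z w, Y z -> Y w -> F z <= M * F w) ->
  (match ereal_sup [set (F z)%:E | z in Y], ereal_inf [set (F z)%:E | z in Y] with
   | EFin s', EFin i' => if (0 < i')%R then (ln (s' / i'))%:E else +oo%E
   | _, _ => +oo%E end <= (ln M)%:E)%E.
Proof.
move=> [z0 Yz0] Fpos FM.
have Fz0 := Fpos _ Yz0.
have hs1 : (ereal_sup [set (F z)%:E | z in Y] <= (M * F z0)%:E)%E.
  by apply: ge_ereal_sup => _ [z Yz <-]; rewrite lee_fin; exact: FM.
have hs2 : ((F z0)%:E <= ereal_sup [set (F z)%:E | z in Y])%E.
  by apply: ereal_sup_ubound; exists z0.
case Es: (ereal_sup _) hs1 hs2 => [s'| |] hs1 hs2.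
2: by [].
2: by [].
rewrite lee_fin in hs1; rewrite lee_fin in hs2.
have hsz : forall z, Y z -> s' <= M * F z.
  move=> z Yz; rewrite -lee_fin -Es; apply: ge_ereal_sup => _ [w Yw <-].
  by rewrite lee_fin; exact: FM.
have Mpos : 0 < M.
  have := hsz _ Yz0; have := lt_le_trans Fz0 hs2 => h1 h2.
  by rewrite -(pmulr_lgt0 _ Fz0); exact: lt_le_trans h1 h2.
have hi1 : (ereal_inf [set (F z)%:E | z in Y] <= (F z0)%:E)%E.
  by apply: ereal_inf_lbound; exists z0.
have hi2 : ((s' / M)%:E <= ereal_inf [set (F z)%:E | z in Y])%E.
  apply: le_ereal_inf_tmp => _ [z Yz <-]; rewrite lee_fin.
  by rewrite ler_pdivrMr // mulrC hsz.
case Ei: (ereal_inf _) hi1 hi2 => [i'| |] hi1 hi2.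
2: by [].
2: by [].
rewrite lee_fin in hi1; rewrite lee_fin in hi2.
have s'pos : 0 < s' := lt_le_trans Fz0 hs2.
have i'pos : 0 < i' by apply: (lt_le_trans _ hi2); rewrite divr_gt0.
rewrite i'pos lee_fin ler_ln ?posrE ?divr_gt0 //.
by rewrite ler_pdivrMr // mulrC -ler_pdivrMr.
Qed.


Section Quadrant.
Variables (R : realType) (B : lmodType R) (C : set B) (P Q : B -> R) (e0 : B).
Hypothesis Cadd : forall x y, C x -> C y -> C (x + y).
Hypothesis Cscale : forall (r : R) x, 0 < r -> C x -> C (r *: x).
Hypothesis Ce0 : C e0.
Hypothesis Padd : forall x y, P (x + y) = P x + P y.
Hypothesis PZ : forall (r : R) x, P (r *: x) = r * P x.
Hypothesis Qadd : forall x y, Q (x + y) = Q x + Q y.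
Hypothesis QZ : forall (r : R) x, Q (r *: x) = r * Q x.
Hypothesis NV : forall x y, C x -> C y -> P x = Q y -> Q x = - P y -> False.

Section Normalized.
Hypothesis Pe0 : 0 < P e0.
Hypothesis Qe0 : Q e0 = 0.

Lemma quad_Ppos x : C x -> 0 < P x.
Proof.
move=> Cx; rewrite ltNge; apply/negP => Px0.
pose s := - P x / P e0.
have s0 : 0 <= s by rewrite /s divr_ge0 // ?oppr_ge0 // ltW.
pose z := x + s *: e0.
have Cz : C z.
  rewrite /z; have [->|sn0] := eqVneq s 0; first by rewrite scale0r addr0.
  by apply: Cadd => //; apply: Cscale => //; rewrite lt_neqAle eq_sym sn0.
have Pz : P z = 0 by rewrite /z Padd PZ /s divfK ?gt_eqF // subrr.
have Qz : Q z = Q x by rewrite /z Qadd QZ Qe0 mulr0 addr0.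
have pe0 : P e0 != 0 by rewrite gt_eqF.
case: (ltgtP (Q z) 0) => hq.
- apply: (@NV z ((- Q z / P e0) *: e0)) => //.
  + by apply: Cscale => //; rewrite divr_gt0 // oppr_gt0.
  + by rewrite QZ Qe0 mulr0 Pz.
  + by rewrite PZ divfK // opprK.
- apply: (@NV ((Q z / P e0) *: e0) z) => //.
  + by apply: Cscale => //; rewrite divr_gt0.
  + by rewrite PZ divfK.
  + by rewrite QZ Qe0 mulr0 Pz oppr0.
- by apply: (@NV z z) => //; rewrite Pz hq ?oppr0.
Qed.

Lemma quad_claim x1 x2 : C x1 -> C x2 -> 0 < Q x1 / P x1 -> Q x2 / P x2 < 0 ->
  (Q x1 / P x1) * (- (Q x2 / P x2)) <= 1.
Proof.
move=> C1 C2 t1p t2n; rewrite leNgt; apply/negP => H.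
have p1 := quad_Ppos x1 C1; have p2 := quad_Ppos x2 C2.
set t1 := Q x1 / P x1 in t1p H; set t2 := Q x2 / P x2 in t2n H.
have eq1 : Q x1 = t1 * P x1 by rewrite /t1 divfK ?gt_eqF.
have eq2 : Q x2 = t2 * P x2 by rewrite /t2 divfK ?gt_eqF.
pose tau := - t2^-1.
have taup : 0 < tau by rewrite /tau oppr_gt0 invr_lt0.
have tlt : tau < t1.
  by rewrite /tau -(ltr_pM2r (x := - t2)) ?oppr_gt0 // mulrNN mulVf ?lt_eqF // mulrC.
pose a := tau - t2; pose b := t1 - tau.
have ap : 0 < a by rewrite /a subr_gt0 (lt_trans t2n).
have bp : 0 < b by rewrite /b subr_gt0.
pose X := (a / P x1) *: x1 + (b / P x2) *: x2.
pose Y := ((a + b) * tau / P x2) *: x2.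
have t2n0 : t2 != 0 by rewrite lt_eqF.
have p1n0 : P x1 != 0 by rewrite gt_eqF.
have p2n0 : P x2 != 0 by rewrite gt_eqF.
apply: (@NV Y X).
- by apply: Cscale C2; rewrite divr_gt0 // mulr_gt0 // addr_gt0.
- by apply: Cadd; [apply: Cscale C1 | apply: Cscale C2]; rewrite divr_gt0.
- rewrite /Y /X PZ Qadd !QZ eq1 eq2 /a /b /tau; field.
  by rewrite p1n0 p2n0 t2n0.
- rewrite /Y /X QZ Padd !PZ eq2 /a /b /tau; field.
  by rewrite p1n0 p2n0 t2n0.
Qed.

Lemma quadrant0 : exists c d : R, (c != 0) || (d != 0) /\
  forall x, C x -> 0 <= c * P x - d * Q x /\ 0 <= d * P x + c * Q x.
Proof.
pose S := [set Q x / P x | x in C].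
have [[T HT]|nlb] := pselect (has_lbound S).
  pose T0 := inf S.
  have S0 : S !=set0 by exists (Q e0 / P e0); exists e0.
  have lbT : forall x, C x -> T0 <= Q x / P x.
    by move=> x Cx; apply: ge_inf; [exists T | exists x].
  exists 1, (- T0); split; first by rewrite oner_neq0.
  move=> x Cx; have px := quad_Ppos x Cx.
  have eqx : Q x = (Q x / P x) * P x by rewrite divfK ?gt_eqF.
  set t := Q x / P x in eqx; have tT := lbT _ Cx.
  suff key : 0 <= 1 + T0 * t.
    rewrite eqx; have tT' : 0 <= t - T0 by rewrite subr_ge0.
    split; nra.
  have [T0n|T0n] := ltP T0 0; last first.
    by rewrite addr_ge0 // mulr_ge0 // (le_trans T0n).
  have [tn|tp] := leP t 0.
    by rewrite addr_ge0 // mulr_le0 // ltW.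
  rewrite leNgt; apply/negP => H.
  have eps0 : 0 < - T0 - t^-1.
    rewrite subr_gt0 -(ltr_pM2r tp) mulVf ?gt_eqF //.
    lra.
  have [t2 [x2 Cx2 <-] ht2] := inf_adherent eps0 (conj S0 (ex_intro _ T HT)).
  rewrite -/T0 addrA subrr add0r in ht2.
  have ht2n : Q x2 / P x2 < 0 by rewrite (lt_trans ht2) // oppr_lt0 invr_gt0.
  have := quad_claim x x2 Cx Cx2 tp ht2n; rewrite -/t leNgt => /negP; apply.
  have tn0 : t != 0 by rewrite gt_eqF.
  by rewrite -(mulfV tn0) ltr_pM2l // ltrNr.
exists 0, 1; split; first by rewrite oner_neq0 orbT.
move=> x Cx; have px := quad_Ppos x Cx.
rewrite !mul0r !mul1r sub0r addr0; split; last exact: ltW.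
rewrite oppr_ge0 leNgt; apply/negP => qx.
have tp : 0 < Q x / P x by rewrite divr_gt0.
have : ~ lbound S (- (Q x / P x)^-1) by move=> h; apply: nlb; exists (- (Q x / P x)^-1).
move=> /existsNP [_ /not_implyP [[x2 Cx2 <-] /negP]]; rewrite -ltNge => ht2.
have ht2n : Q x2 / P x2 < 0 by rewrite (lt_trans ht2) // oppr_lt0 invr_gt0.
have := quad_claim x x2 Cx Cx2 tp ht2n; rewrite leNgt => /negP; apply.
have tn0 : Q x / P x != 0 by rewrite gt_eqF.
by rewrite -(mulfV tn0) ltr_pM2l // ltrNr.
Qed.

End Normalized.
End Quadrant.

Lemma quadrant (R : realType) (B : lmodType R) (C : set B) (P Q : B -> R) (e0 : B)
  (Cadd : forall x y, C x -> C y -> C (x + y))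
  (Cscale : forall (r : R) x, 0 < r -> C x -> C (r *: x))
  (Ce0 : C e0)
  (Padd : forall x y, P (x + y) = P x + P y)
  (PZ : forall (r : R) x, P (r *: x) = r * P x)
  (Qadd : forall x y, Q (x + y) = Q x + Q y)
  (QZ : forall (r : R) x, Q (r *: x) = r * Q x)
  (NV : forall x y, C x -> C y -> P x = Q y -> Q x = - P y -> False) :
  exists c d : R, (c != 0) || (d != 0) /\
  forall x, C x -> 0 <= c * P x - d * Q x /\ 0 <= d * P x + c * Q x.
Proof.
pose p0 := P e0; pose q0 := Q e0.
have N0 : 0 < p0 ^+ 2 + q0 ^+ 2.
  rewrite lt_neqAle addr_ge0 ?sqr_ge0 // andbT eq_sym paddr_eq0 ?sqr_ge0 //.
  rewrite !sqrf_eq0; apply/negP => /andP[/eqP h1 /eqP h2].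
  by apply: (NV e0 e0 Ce0 Ce0); rewrite -/p0 -/q0 h1 h2 ?oppr0.
have Nn0 : p0 ^+ 2 + q0 ^+ 2 != 0 by rewrite gt_eqF.
pose P' x := p0 * P x + q0 * Q x.
pose Q' x := p0 * Q x - q0 * P x.
have P'add x y : P' (x + y) = P' x + P' y by rewrite /P' Padd Qadd; ring.
have Q'add x y : Q' (x + y) = Q' x + Q' y by rewrite /Q' Padd Qadd; ring.
have P'Z r x : P' (r *: x) = r * P' x by rewrite /P' PZ QZ; ring.
have Q'Z r x : Q' (r *: x) = r * Q' x by rewrite /Q' PZ QZ; ring.
have NV' x y : C x -> C y -> P' x = Q' y -> Q' x = - P' y -> False.
  move=> Cx Cy h1 h2; apply: (NV x y Cx Cy).
  - apply/eqP; rewrite -subr_eq0 -(mulIr_eq0 _ (rregP Nn0)).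
    have -> : (P x - Q y) * (p0 ^+ 2 + q0 ^+ 2) =
      p0 * (P' x - Q' y) - q0 * (Q' x + P' y) by rewrite /P' /Q'; ring.
    by rewrite h1 h2 subrr addNr !mulr0 subrr.
  - apply/eqP; rewrite -subr_eq0 opprK -(mulIr_eq0 _ (rregP Nn0)).
    have -> : (Q x + P y) * (p0 ^+ 2 + q0 ^+ 2) =
      q0 * (P' x - Q' y) + p0 * (Q' x + P' y) by rewrite /P' /Q'; ring.
    by rewrite h1 h2 subrr addNr !mulr0 addr0.
have P'e0 : 0 < P' e0 by rewrite /P' -!expr2.
have Q'e0 : Q' e0 = 0 by rewrite /Q' -/p0 -/q0 mulrC subrr.
have [c' [d' [nz H]]] := @quadrant0 R B C P' Q' e0 Cadd Cscale Ce0 P'add P'Z Q'add Q'Z NV' P'e0 Q'e0.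
exists (c' * p0 + d' * q0), (d' * p0 - c' * q0); split.
  apply: contraLR nz; rewrite negb_or !negbK => /andP[/eqP h1 /eqP h2].
  rewrite negb_or !negbK; apply/andP; split.
    rewrite -(mulIr_eq0 _ (rregP Nn0)).
    have -> : c' * (p0 ^+ 2 + q0 ^+ 2) = p0 * (c' * p0 + d' * q0) - q0 * (d' * p0 - c' * q0) by ring.
    by rewrite h1 h2 !mulr0 subrr.
  rewrite -(mulIr_eq0 _ (rregP Nn0)).
  have -> : d' * (p0 ^+ 2 + q0 ^+ 2) = q0 * (c' * p0 + d' * q0) + p0 * (d' * p0 - c' * q0) by ring.
  by rewrite h1 h2 !mulr0 addr0.
move=> x Cx; have [h1 h2] := H x Cx; split.
  by have -> : (c' * p0 + d' * q0) * P x - (d' * p0 - c' * q0) * Q x = c' * P' x - d' * Q' x by rewrite /P' /Q'; ring.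
by have -> : (d' * p0 - c' * q0) * P x + (c' * p0 + d' * q0) * Q x = d' * P' x + c' * Q' x by rewrite /P' /Q'; ring.
Qed.


Lemma sqrt_ge_abs (R : realType) (x y : R) : `|x| <= Num.sqrt (x ^+ 2 + y ^+ 2).
Proof.
rewrite -sqrtr_sqr ler_sqrt; last by rewrite addr_ge0 // sqr_ge0.
by rewrite lerDl sqr_ge0.
Qed.

Lemma sqrt_le_sum (R : realType) (x y : R) : Num.sqrt (x ^+ 2 + y ^+ 2) <= `|x| + `|y|.
Proof.
have h : 0 <= `|x| + `|y| by rewrite addr_ge0.
rewrite -[X in _ <= X](ger0_norm h) -sqrtr_sqr ler_sqrt; last by rewrite sqr_ge0.
rewrite sqrrD -[x ^+ 2](real_normK (num_real x)) -[y ^+ 2](real_normK (num_real y)).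
rewrite lerD2r lerDl mulrn_wge0 // mulr_ge0 //.
Qed.

Lemma core_bound (R : realType) (fu gu fv gv a b q c : R) :
  0 <= fu -> 0 <= gu -> 0 <= fv -> 0 <= gv -> 0 < a ->
  a * fv <= fu -> fu <= b * fv -> a * gv <= gu -> gu <= b * gv ->
  b <= q * a -> 1 <= q -> 4 <= c ->
  fu + gu + fv + gv <= c * q * Num.sqrt ((fu - gv) ^+ 2 + (gu + fv) ^+ 2) /\
  Num.sqrt ((fu - gv) ^+ 2 + (gu + fv) ^+ 2) <= fu + gu + fv + gv.
Proof.
move=> fu0 gu0 fv0 gv0 a0 h1 h2 h3 h4 hb hq hc.
set N := Num.sqrt _.
have Nx : `|fu - gv| <= N by exact: sqrt_ge_abs.
have Ny : `|gu + fv| <= N by rewrite /N (addrC ((fu - gv) ^+ 2)); exact: sqrt_ge_abs.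
have Nu : N <= `|fu - gv| + `|gu + fv| by exact: sqrt_le_sum.
have N0 : 0 <= N by rewrite /N sqrtr_ge0.
have guv : 0 <= gu + fv by rewrite addr_ge0.
rewrite (ger0_norm guv) in Ny Nu.
have cqN : 4 * q * N <= c * q * N.
  rewrite ler_wpM2r //; rewrite ler_wpM2r //; lra.
have qN : N <= q * N by rewrite -[X in X <= _]mul1r ler_wpM2r.
split; last first.
  apply: (le_trans Nu).
  have : `|fu - gv| <= fu + gv.
    by apply: le_trans (ler_normB _ _) _; rewrite (ger0_norm fu0) (ger0_norm gv0).
  lra.
have [a1|a1] := leP 1 a.
  have : gv <= gu.
    apply: le_trans h3; rewrite -[X in X <= _]mul1r ler_wpM2r //.
  have : fu - gv <= N by apply: le_trans Nx; exact: ler_norm.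
  lra.
have [b1|b1] := leP b 1.
  have : fu <= fv.
    apply: (le_trans h2); rewrite -[X in _ <= X]mul1r ler_wpM2r //.
  have : gv - fu <= N by apply: le_trans Nx; rewrite distrC; exact: ler_norm.
  lra.
have q0 : 0 <= q by lra.
have bq : b <= q.
  apply: (le_trans hb); rewrite -[X in _ <= X]mulr1; apply: ler_wpM2l => //; exact: ltW.
have qa1 : 1 <= q * a by apply: le_trans hb; exact: ltW.
have e1 : fu <= q * fv.
  by apply: (le_trans h2); apply: ler_wpM2r.
have e2 : gv <= q * gu.
  have : gv <= (q * a) * gv by rewrite -[X in X <= _]mul1r ler_wpM2r.
  move/le_trans; apply; rewrite -mulrA ler_wpM2l //.
have e3 : (gu + fv) + q * (gu + fv) <= N + q * N.
  by rewrite lerD // ler_wpM2l.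
have e4 : N + q * N <= 4 * q * N.
  have : (1 + q) * N <= (4 * q) * N by rewrite ler_wpM2r //; lra.
  by rewrite mulrDl mul1r.
lra.
Qed.

Definition linR (R : realType) (B : lmodType R) (psi : B -> R) :=
  (forall x y, psi (x + y) = psi x + psi y) /\ (forall (r : R) x, psi (r *: x) = r * psi x).
Arguments linR {R B}.

Section Lin.
Variables (R : realType) (B : normedModType R).

Lemma is_linear0 {W : lmodType R} {f : B -> W} : is_linear f -> f 0 = 0.
Proof.
move=> hf; have := hf 1 0 0; rewrite scale1r addr0 scale1r.
move=> /(congr1 (fun z => z - f 0)); rewrite subrr addrK => h.
by rewrite -h.
Qed.

Lemma is_linearD {W : lmodType R} {f : B -> W} : is_linear f ->
  forall x y, f (x + y) = f x + f y.
Proof. by move=> hf x y; have := hf 1 x y; rewrite !scale1r. Qed.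

Lemma is_linearZ {W : lmodType R} {f : B -> W} : is_linear f ->
  forall (r : R) x, f (r *: x) = r *: f x.
Proof. by move=> hf r x; rewrite -[r *: x]addr0 hf (is_linear0 hf) addr0. Qed.

Lemma is_linearR {f : B -> R} : is_linear (f : B -> R^o) -> linR f.
Proof. by move=> hf; split; [exact: is_linearD | exact: is_linearZ]. Qed.

Lemma linRB (psi : B -> R) : linR psi -> forall x y, psi (x - y) = psi x - psi y.
Proof.
move=> [hD hZ] x y; rewrite hD -scaleN1r hZ; ring.
Qed.

End Lin.
Arguments linRB {R B psi}.
Arguments is_linear0 {R B W f}.
Arguments is_linearD {R B W f}.
Arguments is_linearZ {R B W f}.
Arguments is_linearR {R B f}.

Section Cone.
Variables (R : realType) (B : normedModType R) (D : set B) (S : set (B -> R))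
  (e : B) (m : B -> R) (kappa : R).
Hypothesis H : cone_setting D S e m kappa.

Lemma cs_Slin l : S l -> linR l.
Proof. by case: H => _ [_ [hS _]] /hS [/is_linearR]. Qed.

Lemma cs_mlin : linR m.
Proof. by case: H => _ [_ [_ [_ [_ [_ [[_ /is_linearR]]]]]]]. Qed.

Lemma cs_kappa : 0 < kappa /\ kappa < 1.
Proof. by case: H => _ [_ [_ [_ [_ [_ [_ ]]]]]]. Qed.

Lemma cs_mpos x : coneR S x -> 0 < m x.
Proof.
case: H => _ [_ [_ [_ [_ [_ [[_ _ _ _ hm] [k0 _]]]]]]] Cx.
apply: lt_le_trans (hm _ Cx); rewrite mulr_gt0 // normr_gt0; case: Cx => hx _; exact/eqP.
Qed.

Lemma cs_e : coneR S e.
Proof. by case: H => _ [_ [_ [_ [[_ [he _]] _]]]]. Qed.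

Lemma cone_add x y : coneR S x -> coneR S y -> coneR S (x + y).
Proof.
move=> Cx Cy; split.
  move=> h0; have := cs_mpos x Cx; have := cs_mpos y Cy.
  have : m (x + y) = 0 by rewrite h0 -(scale0r 0) (proj2 cs_mlin) mul0r.
  by rewrite (proj1 cs_mlin) => h1 h2 h3; clear -h1 h2 h3; lra.
move=> l Sl; rewrite (proj1 (cs_Slin l Sl)); apply: addr_ge0.
  by case: Cx => _ hC; exact: hC.
by case: Cy => _ hC; exact: hC.
Qed.

Lemma cone_scale (r : R) x : 0 < r -> coneR S x -> coneR S (r *: x).
Proof.
move=> r0 Cx; split.
  move=> /eqP; rewrite scaler_eq0 (gt_eqF r0) /=; case: Cx => hx _ /eqP; exact: hx.
move=> l Sl; rewrite (proj2 (cs_Slin l Sl)); apply: mulr_ge0; first exact: ltW.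
by case: Cx => _ hC; exact: hC.
Qed.


Lemma hilbert_bounds u v r : coneR S u -> coneR S v -> hilbert_dist S v u = r%:E ->
  exists a b : R, [/\ 0 < a, a <= b, ln (b / a) = r &
    forall psi, linR psi -> (forall x, coneR S x -> 0 <= psi x) ->
      a * psi v <= psi u /\ psi u <= b * psi v].
Proof.
move=> Cu Cv; rewrite /hilbert_dist /=.
set As := [set lam%:E | lam in _].
set Bs := [set mu%:E | mu in _].
case Ea: (ereal_sup As) => [a'| |]; case Eb: (ereal_inf Bs) => [b'| |] //.
case: ifP => // a0 [hr].
have [mu [mu0 Cmu]] : exists mu, 0 < mu /\ coneR S (mu *: v - u).
  apply: contrapT => hne; move: Eb; rewrite (_ : Bs = set0) ?ereal_inf0 //.
  by apply/seteqP; split => // _ [mu hmu <-]; apply: hne; exists mu.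
have key : forall psi, linR psi -> (forall x, coneR S x -> 0 <= psi x) ->
    a' * psi v <= psi u /\ psi u <= b' * psi v.
  move=> psi lp pp; have pv := pp v Cv; have pu := pp u Cu.
  move: pv; rewrite le0r => /orP[/eqP pv0|pvp].
    rewrite pv0 mulr0; split => //.
    have := pp _ Cmu; rewrite (linRB lp) (proj2 lp) pv0 mulr0 sub0r oppr_ge0.
    by move=> h; rewrite mulr0.
  split.
    rewrite -ler_pdivlMr // -lee_fin -Ea; apply: ge_ereal_sup => _ [lam [lam0 Clam] <-].
    rewrite lee_fin ler_pdivlMr //; have := pp _ Clam.
    by rewrite (linRB lp) (proj2 lp) subr_ge0.
  rewrite -ler_pdivrMr // -lee_fin -Eb; apply: le_ereal_inf_tmp => _ [lam [lam0 Clam] <-].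
  rewrite lee_fin ler_pdivrMr //; have := pp _ Clam.
  by rewrite (linRB lp) (proj2 lp) subr_ge0.
exists a', b'; split => //.
have [h1 h2] := key m cs_mlin (fun x Cx => ltW (cs_mpos x Cx)).
have mv := cs_mpos v Cv.
by rewrite -(ler_pM2r mv) (le_trans h1 h2).
Qed.

End Cone.
Arguments cs_Slin {R B D S e m kappa}.
Arguments cs_mlin {R B D S e m kappa}.
Arguments cs_kappa {R B D S e m kappa}.
Arguments cs_mpos {R B D S e m kappa}.
Arguments cs_e {R B D S e m kappa}.
Arguments cone_add {R B D S e m kappa}.
Arguments cone_scale {R B D S e m kappa}.
Arguments hilbert_bounds {R B D S e m kappa}.

Section CmodLemmas.
Variable R : realType.
Local Open Scope complex_scope.

Lemma cmodE (z : R[i]) : cmod z = Normc.normc z.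
Proof. by case: z. Qed.

Lemma cmodM (z w : R[i]) : cmod (z * w) = cmod z * cmod w.
Proof. by rewrite !cmodE Normc.normcM. Qed.

Lemma cmodV (z : R[i]) : cmod (z^-1) = (cmod z)^-1.
Proof. by rewrite !cmodE Normc.normcV. Qed.

Lemma cmod_ge0 (z : R[i]) : 0 <= cmod z.
Proof. by rewrite /cmod sqrtr_ge0. Qed.

Lemma cmod_gt0 (z : R[i]) : z != 0 -> 0 < cmod z.
Proof.
move=> nz; rewrite lt_neqAle cmod_ge0 andbT eq_sym; apply/eqP => h.
by move/eqP: nz; apply; apply: Normc.eq0_normc; rewrite -cmodE.
Qed.

Lemma cmod_complex (a b : R) : cmod (a +i* b) = Num.sqrt (a ^+ 2 + b ^+ 2).
Proof. by []. Qed.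

End CmodLemmas.

Section CxLin.
Variables (R : realType) (B : normedModType R).
Local Open Scope complex_scope.

Lemma cscale1 (p : B * B) : Defs.cscale 1 p = p.
Proof. by case: p => x y; rewrite /Defs.cscale /= !scale1r !scale0r subr0 add0r. Qed.

Lemma cscale_i (y : B) : Defs.cscale 'i (y, 0) = (0, y).
Proof. by rewrite /Defs.cscale /= !scale0r !scaler0 scale1r subr0 addr0. Qed.

Lemma cscale_r (r : R) (x : B) : Defs.cscale r%:C (x, 0) = (r *: x, 0).
Proof. by rewrite /Defs.cscale /= !scaler0 scale0r subr0 addr0. Qed.

Variable l : B * B -> R[i].
Hypothesis hl : cdual l.

Lemma cdual_addp (p q : B * B) : l (p.1 + q.1, p.2 + q.2) = l p + l q.
Proof. by case: hl. Qed.

Lemma cdual_scale z p : l (Defs.cscale z p) = z * l p.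
Proof. by case: hl. Qed.

Lemma cdual_decomp x y : l (x, y) = l (x, 0) + 'i * l (y, 0).
Proof.
have -> : (x, y) = ((x, 0 : B).1 + (0 : B, y).1, (x, 0 : B).2 + (0 : B, y).2).
  by rewrite /= addr0 add0r.
by rewrite cdual_addp -cscale_i cdual_scale.
Qed.

Lemma cdual_add1 x y : l (x + y, 0) = l (x, 0) + l (y, 0).
Proof. by rewrite -cdual_addp /= addr0. Qed.

Lemma cdual_scale1 (r : R) x : l (r *: x, 0) = r%:C * l (x, 0).
Proof. by rewrite -cscale_r cdual_scale. Qed.

Definition Pl x := complex.Re (l (x, 0)).
Definition Ql x := complex.Im (l (x, 0)).

Lemma Pl_lin : linR Pl.
Proof.
split=> [x y|r x]; rewrite /Pl ?cdual_add1 ?cdual_scale1; first by case: (l (x, 0)) => a b; case: (l (y, 0)).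
by case: (l (x, 0)) => a b /=; ring.
Qed.

Lemma Ql_lin : linR Ql.
Proof.
split=> [x y|r x]; rewrite /Ql ?cdual_add1 ?cdual_scale1; first by case: (l (x, 0)) => a b; case: (l (y, 0)).
by case: (l (x, 0)) => a b /=; ring.
Qed.

Lemma cdual_PQ x y : l (x, y) = (Pl x - Ql y) +i* (Ql x + Pl y).
Proof.
rewrite cdual_decomp /Pl /Ql; case: (l (x, 0)) => a b; case: (l (y, 0)) => c d /=.
by apply/eqP; rewrite eq_complex /=; apply/andP; split; apply/eqP; ring.
Qed.

End CxLin.
Arguments cscale1 {R B}.
Arguments cscale_i {R B}.
Arguments cscale_r {R B}.
Arguments cdual_addp {R B l}.
Arguments cdual_scale {R B l}.
Arguments cdual_decomp {R B l}.
Arguments cdual_add1 {R B l}.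
Arguments cdual_scale1 {R B l}.
Arguments Pl {R B}.
Arguments Ql {R B}.
Arguments Pl_lin {R B l}.
Arguments Ql_lin {R B l}.
Arguments cdual_PQ {R B l}.

Section PerL.
Variables (R : realType) (B : normedModType R) (D : set B) (S : set (B -> R))
  (e : B) (m : B -> R) (kappa : R).
Hypothesis H : cone_setting D S e m kappa.
Local Open Scope complex_scope.

Lemma cone_dual_quadrant l : cone_dual S l ->
  exists (nu : R[i]) (f g : B -> R), [/\ nu != 0, linR f, linR g,
    (forall x, coneR S x -> 0 <= f x /\ 0 <= g x) &
    forall x y, nu * l (x, y) = (f x - g y) +i* (g x + f y)].
Proof.
move=> [hl hnv].
have [PD PZ] := Pl_lin hl; have [QD QZ] := Ql_lin hl.
have NV : forall x y, coneR S x -> coneR S y -> Pl l x = Ql l y -> Ql l x = - Pl l y -> False.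
  move=> x y Cx Cy h1 h2.
  have : l (x, y) != 0 by apply: hnv; exists 1, x, y; rewrite cscale1 oner_neq0.
  by rewrite cdual_PQ // h1 h2 subrr addNr eqxx.
have [c [d [cd hcd]]] := @quadrant _ _ _ _ _ _ (cone_add H) (cone_scale H) (cs_e H) PD PZ QD QZ NV.
exists (c +i* d), (fun x => c * Pl l x - d * Ql l x), (fun x => d * Pl l x + c * Ql l x).
split.
- apply: contraL cd => /eqP[-> ->]; by rewrite eqxx.
- by split=> [x y|r x]; rewrite ?PD ?QD ?PZ ?QZ; ring.
- by split=> [x y|r x]; rewrite ?PD ?QD ?PZ ?QZ; ring.
- exact: hcd.
- move=> x y; rewrite cdual_PQ //.
  by apply/eqP; rewrite eq_complex /=; apply/andP; split; apply/eqP; ring.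
Qed.

End PerL.

Section Bnd.
Variables (R : realType) (B : normedModType R).

Lemma cont_lin_bounded (m : B -> R) : linR m -> continuous m ->
  exists K, 0 <= K /\ forall x, `|m x| <= K * `|x|.
Proof.
move=> [mD mZ] mc.
have m0 : m 0 = 0 by rewrite -(scale0r 0) mZ mul0r.
have := mc 0; move/cvgr_dist_lt => /(_ 1 ltr01); rewrite m0.
move=> /nbhs_norm0P [d /= d0 hd].
exists (2 / d); split; first by rewrite divr_ge0 // ltW.
move=> x; have [->|xn0] := eqVneq x 0; first by rewrite m0 !normr0 mulr0.
have nx : 0 < `|x| by rewrite normr_gt0.
pose k := d / (2 * `|x|).
have k0 : 0 < k by rewrite /k divr_gt0 // mulr_gt0.
have : `|k *: x| < d.
  rewrite normrZ gtr0_norm // /k.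
  have -> : d / (2 * `|x|) * `|x| = d / 2 by field; rewrite gt_eqF.
  lra.
move/hd => /=; rewrite sub0r normrN mZ normrM gtr0_norm //.
rewrite /k => h; rewrite -ler_pdivrMl ?divr_gt0 //; apply: ltW.
suff -> : (2 / d)^-1 * `|m x| = d / (2 * `|x|) * `|m x| * `|x|.
  by rewrite -[X in _ < X]mul1r ltr_pM2r.
rewrite invf_div; field; rewrite gt_eqF // gt_eqF //.
Qed.

Lemma cnorm_ge (p : B * B) : Num.sqrt (`|p.1| ^+ 2 + `|p.2| ^+ 2) <= cnorm p.
Proof.
rewrite /cnorm; apply: ub_le_sup.
  exists (2 * (`|p.1| + `|p.2|)) => _ [t _ <-].
  apply: le_trans (sqrt_le_sum _ _ _) _; rewrite !normr_id.
  have h1 : `|cos t *: p.1 - sin t *: p.2| <= `|p.1| + `|p.2|.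
    apply: le_trans (ler_normB _ _) _; rewrite !normrZ.
    apply: lerD; rewrite -[X in _ <= X]mul1r ler_wpM2r // ?cos_max ?sin_max //.
  have h2 : `|sin t *: p.1 + cos t *: p.2| <= `|p.1| + `|p.2|.
    apply: le_trans (ler_normD _ _) _; rewrite !normrZ.
    apply: lerD; rewrite -[X in _ <= X]mul1r ler_wpM2r // ?cos_max ?sin_max //.
  lra.
by exists 0 => //; rewrite cos0 sin0 !scale0r !scale1r subr0 add0r.
Qed.

End Bnd.
Arguments cont_lin_bounded {R B m}.
Arguments cnorm_ge {R B}.

Definition l0 (R : realType) (B : normedModType R) (m : B -> R) (p : B * B) : R[i] :=
  (m p.1 +i* m p.2)%C.
Arguments l0 {R B}.

Section L0.
Variables (R : realType) (B : normedModType R) (D : set B) (S : set (B -> R))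
  (e : B) (m : B -> R) (kappa : R).
Hypothesis H : cone_setting D S e m kappa.
Local Open Scope complex_scope.

Lemma l0_scale z p : l0 m (Defs.cscale z p) = z * l0 m p.
Proof.
have [mD mZ] := cs_mlin H; case: z => a b; case: p => x y.
rewrite /l0 /Defs.cscale /= (linRB (cs_mlin H)) mD !mZ.
by apply/eqP; rewrite eq_complex /=; apply/andP; split; apply/eqP; ring.
Qed.

Lemma l0_cone_dual : cone_dual S (l0 m).
Proof.
have [mD mZ] := cs_mlin H.
have mc : continuous m by case: H => _ [_ [_ [_ [_ [_ [[]]]]]]].
split; first split.
- by move=> p q; rewrite /l0 /= !mD.
- exact: l0_scale.
- have [K [K0 hK]] := cont_lin_bounded (cs_mlin H) mc.
  exists K => p; rewrite /l0 cmod_complex /=.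
  apply: le_trans (ler_wpM2l K0 (cnorm_ge p)).
  rewrite -[K in K * _](@ger0_norm _ K) // -sqrtr_sqr -sqrtrM ?sqr_ge0 //.
  rewrite ler_sqrt; last by rewrite mulr_ge0 ?sqr_ge0 // addr_ge0 ?sqr_ge0.
  have h1 := hK p.1; have h2 := hK p.2.
  have e1 : m p.1 ^+ 2 = `|m p.1| ^+ 2 by rewrite real_normK ?num_real.
  have e2 : m p.2 ^+ 2 = `|m p.2| ^+ 2 by rewrite real_normK ?num_real.
  rewrite e1 e2 mulrDr -!exprMn; apply: lerD; rewrite lerXn2r ?nnegrE ?mulr_ge0 //.
- move=> _ [z [x [y [zn0 Cx Cy ->]]]]; rewrite l0_scale mulf_neq0 //.
  apply/eqP; case=> /eqP; rewrite gt_eqF //; exact: (cs_mpos H).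
Qed.

End L0.

Lemma complexify_cscale (R : realType) (B1 B2 : normedModType R) (A : B1 -> B2)
  (Alin : is_linear A) z x y :
  complexify A (Defs.cscale z (x, y)) = Defs.cscale z (A x, A y).
Proof.
rewrite /complexify /Defs.cscale /= -!scaleNr.
by rewrite !(is_linearD Alin) !(is_linearZ Alin).
Qed.

Lemma cross_term (R : realType) (x1 y1 x2 y2 a b q : R) :
  0 <= y1 -> 0 <= y2 -> 0 < a -> x1 <= b * y1 -> a * y2 <= x2 -> b <= q * a -> 0 <= q ->
  x1 * y2 <= q * (y1 * x2).
Proof.
move=> y10 y20 a0 h1 h2 hb q0.
have s1 := ler_wpM2r y20 h1.
have s2 := ler_wpM2r (mulr_ge0 y10 y20) hb.
have s3 := ler_wpM2l (mulr_ge0 q0 y10) h2.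
have e1 : b * y1 * y2 = b * (y1 * y2) by ring.
have e2 : q * a * (y1 * y2) = q * y1 * (a * y2) by ring.
have e3 : q * (y1 * x2) = q * y1 * x2 by ring.
by rewrite e3; apply: (le_trans s1); rewrite e1; apply: (le_trans s2); rewrite e2.
Qed.

Lemma four_terms (R : realType) (a1 b1 a1' b1' a2 b2 a2' b2' q : R) :
  a1 * a2' <= q * (a1' * a2) -> a1 * b2' <= q * (b1' * a2) ->
  b1 * a2' <= q * (a1' * b2) -> b1 * b2' <= q * (b1' * b2) ->
  (a1 + b1) * (a2' + b2') <= q * ((a1' + b1') * (a2 + b2)).
Proof.
move=> h1 h2 h3 h4.
have -> : (a1 + b1) * (a2' + b2') = a1 * a2' + a1 * b2' + b1 * a2' + b1 * b2' by ring.
have -> : q * ((a1' + b1') * (a2 + b2)) = q * (a1' * a2) + q * (b1' * a2) + q * (a1' * b2) + q * (b1' * b2) by ring.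
by rewrite !lerD.
Qed.

Lemma final_ratio (R : realType) (X1 Y1 X2 Y2 T1 T1' T2 T2' K q : R) :
  0 <= X1 -> 0 <= Y2 -> 0 <= T1 -> 0 <= q -> 0 <= T1' -> 0 <= T2 -> 0 <= K ->
  X1 <= T1 -> Y2 <= T2' -> T1 * T2' <= q * (T1' * T2) -> T1' <= K * Y1 -> T2 <= K * X2 ->
  X1 * Y2 <= K ^+ 2 * q * (X2 * Y1).
Proof.
move=> X10 Y20 T10 q0 T1'0 T20 K0 h1 h2 h3 h4 h5.
apply: (le_trans (ler_pM X10 Y20 h1 h2)); apply: (le_trans h3).
have -> : K ^+ 2 * q * (X2 * Y1) = q * ((K * Y1) * (K * X2)) by ring.
by rewrite ler_wpM2l // ler_pM.
Qed.

Lemma c_ge4 (R : realType) (kappa : R) : 0 < kappa -> kappa < 1 ->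
  4 <= 3 * Num.sqrt 2 / kappa ^+ 2.
Proof.
move=> k0 k1.
have s2 : 4 <= 3 * Num.sqrt 2 :> R.
  have e : Num.sqrt 2 ^+ 2 = 2 :> R by rewrite sqr_sqrtr.
  have s0 : 0 <= Num.sqrt 2 :> R by rewrite sqrtr_ge0.
  rewrite expr2 in e.
  have [h|h] := leP 4 (3 * Num.sqrt 2 : R); first by []. 
  exfalso.
  have h0 : 0 <= 3 * Num.sqrt 2 :> R by rewrite mulr_ge0.
  have := ltr_pM h0 h0 h h.
  have -> : (3 * Num.sqrt 2) * (3 * Num.sqrt 2) = 9 * (Num.sqrt 2 * Num.sqrt 2) :> R by ring.
  rewrite e; lra.
have kk : 0 < kappa ^+ 2 by rewrite exprn_gt0.
rewrite ler_pdivlMr //.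
have : kappa ^+ 2 <= 1 by rewrite expr_le1 // ltW.
lra.
Qed.

Lemma hilbert_dist_neqNy (R : realType) (B : normedModType R) (S : set (B -> R)) h g :
  hilbert_dist S h g != -oo%E.
Proof.
rewrite /hilbert_dist /=.
by case: (ereal_sup (R:=R) _) => [a'| |]; try case: (ereal_inf (R:=R) _) => [b'| |]; rewrite /= ?(if_same); try case: ifP.
Qed.

Theorem lemma5p16 (R : realType)
  (B1 B2 : completeNormedModType R)
  (D1 : set B1) (S1 : set (B1 -> R)) (e1 : B1) (m1 : B1 -> R)
  (D2 : set B2) (S2 : set (B2 -> R)) (e2 : B2) (m2 : B2 -> R)
  (kappa : R)
  (H1 : cone_setting D1 S1 e1 m1 kappa)
  (H2 : cone_setting D2 S2 e2 m2 kappa)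
  (A : B1 -> B2)
  (Alin : is_linear A) (Acont : continuous A)
  (Acone : A @` coneR S1 `<=` coneR S2)
  (Afin : (ediam (hilbert_dist S2) (A @` coneR S1) < +oo)%E) :
  (ediam (delta_C S2) (complexify A @` coneC S1) <=
     (8 * fine (ediam (hilbert_dist S2) (A @` coneR S1))
      + 2 * ln (3 * Num.sqrt 2 / kappa ^+ 2))%:E)%E.
Proof.
have [kap0 kap1] := cs_kappa H2.
set P2 := A @` coneR S1.
set Ed := ediam (hilbert_dist S2) P2.
have hpair : forall s t, P2 s -> P2 t ->
    exists r, hilbert_dist S2 t s = r%:E /\ (r%:E <= Ed)%E.
  move=> s t Ps Pt.
  have hle : (hilbert_dist S2 t s <= Ed)%E.
    by apply: ereal_sup_ubound; exists t => //; exists s.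
  exists (fine (hilbert_dist S2 t s)); rewrite fineK //.
  rewrite fin_numE hilbert_dist_neqNy /=.
  by rewrite lt_eqF //; apply: le_lt_trans hle Afin.
set Delta := fine Ed.
set q := expR Delta.
set c := 3 * Num.sqrt 2 / kappa ^+ 2.
have c4 : 4 <= c := c_ge4 _ _ kap0 kap1.
rewrite /ediam; apply: ge_ereal_sup => z hz.
case: hz => h [p Cp hp] [g [p' Cp' hp'] <-]; subst h g.
move: Cp Cp' => [zz [x [y [zn0 Cx Cy ->]]]] [ww [x' [y' [wn0 Cx' Cy' ->]]]].
rewrite !complexify_cscale //.
set u := A x; set v := A y; set u' := A x'; set v' := A y'.
have Pu : P2 u by exists x.
have Pv : P2 v by exists y.
have Pu' : P2 u' by exists x'.
have Pv' : P2 v' by exists y'.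
have EdE : Ed = Delta%:E.
  have [r [_ hr]] := hpair u u Pu Pu.
  rewrite /Delta fineK // fin_numE; apply/andP; split.
    by rewrite gt_eqF //; apply: lt_le_trans hr; exact: ltNyr.
  by rewrite lt_eqF.
have Pb : forall s t, P2 s -> P2 t -> exists a b, [/\ 0 < a, a <= b, b <= q * a &
    forall psi, linR psi -> (forall x, coneR S2 x -> 0 <= psi x) ->
      a * psi t <= psi s /\ psi s <= b * psi t].
  move=> s t Ps Pt.
  have [r [hr hrE]] := hpair s t Ps Pt.
  have [a [b [a0 ab hab key]]] := hilbert_bounds H2 s t r (Acone _ Ps) (Acone _ Pt) hr.
  exists a, b; split => //.
  have ba : 0 < b / a by rewrite divr_gt0 // (lt_le_trans a0 ab).
  have : b / a <= q.
    rewrite -(lnK ba) hab /q ler_expR.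
    by move: hrE; rewrite EdE lee_fin.
  by rewrite ler_pdivrMr.
have q1 : 1 <= q.
  have [a [b [a0 ab bq _]]] := Pb u u Pu Pu.
  by rewrite -(ler_pM2r a0) mul1r (le_trans ab).
have q0 : 0 <= q by apply: le_trans q1.
have perl : forall l, cone_dual S2 l -> exists k (phi : B2 -> R), [/\ 0 < k, linR phi,
    (forall x, coneR S2 x -> 0 <= phi x) &
    forall s t, P2 s -> P2 t -> phi s + phi t <= c * q * (k * cmod (l (s, t))) /\
      k * cmod (l (s, t)) <= phi s + phi t].
  move=> l hl.
  have [nu [f [g [nun0 fl gl fg hnu]]]] := @cone_dual_quadrant _ _ _ _ _ _ _ H2 l hl.
  exists (cmod nu), (fun x => f x + g x); split.
  - exact: cmod_gt0.
  - split => [x1 x2|r x1]; rewrite ?(proj1 fl) ?(proj1 gl) ?(proj2 fl) ?(proj2 gl); ring.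
  - by move=> x1 Cx1; have [h1 h2] := fg x1 Cx1; rewrite addr_ge0.
  - move=> s t Ps Pt.
    have [a [b [a0 ab bq hb]]] := Pb s t Ps Pt.
    have [hf1 hf2] := hb f fl (fun x Cx => (fg x Cx).1).
    have [hg1 hg2] := hb g gl (fun x Cx => (fg x Cx).2).
    have [fs0 gs0] := fg s (Acone _ Ps); have [ft0 gt0] := fg t (Acone _ Pt).
    rewrite -cmodM hnu cmod_complex.
    have [c1 c2] := core_bound _ _ _ _ _ _ _ _ _ fs0 gs0 ft0 gt0 a0 hf1 hf2 hg1 hg2 bq q1 c4.
    by split; lra.
set M := (c * q) ^+ 2 * q.
have c0 : 0 < c by apply: lt_le_trans c4.
have hM : ((ln M)%:E <= (8 * Delta + 2 * ln c)%:E)%E.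
  have qp : 0 < q := lt_le_trans ltr01 q1.
  have Mp : 0 < M by apply: mulr_gt0 (exprn_gt0 _ (mulr_gt0 c0 qp)) qp.
  rewrite lee_fin -[X in _ <= X]expRK ler_ln ?posrE ?expR_gt0 //.
  rewrite expRD expRM_natl expRM_natl (lnK c0) -/q /M exprMn -mulrA mulrC.
  apply: ler_wpM2r; first exact: exprn_ge0 (ltW c0).
  have -> : q ^+ 8 = q ^+ 2 * q * q ^+ 5 by rewrite -exprSr -exprD.
  rewrite -[X in X <= _]mulr1; apply: ler_wpM2l.
    by rewrite mulr_ge0 ?exprn_ge0.
  exact: exprn_ege1.
have Cp : forall z' s t, z' != 0 -> P2 s -> P2 t -> coneC S2 (Defs.cscale z' (s, t)).
  by move=> z' s t zn Ps Pt; exists z', s, t; split => //; apply: Acone.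
have Cp1 : forall s t, P2 s -> P2 t -> coneC S2 (s, t).
  by move=> s t Ps Pt; rewrite -(cscale1 (s, t)); apply: Cp => //; rewrite oner_neq0.
rewrite /delta_C /Eset !image_comp.
apply: le_trans (@ratio_set_le R _ (cone_dual S2)
  (fun l => cmod (l (Defs.cscale zz (u, v)) / l (Defs.cscale ww (u', v')))) M _ _ _) hM.
- by exists (l0 m2); exact: (l0_cone_dual _ _ _ _ _ _ _ H2).
- move=> l [_ hnv]; apply: cmod_gt0; rewrite mulf_neq0 ?invr_eq0 //; apply: hnv; exact: Cp.
move=> l1 l2 hl1 hl2.
have [k1 [phi1 [k10 phl1 ph10 hb1]]] := perl l1 hl1.
have [k2 [phi2 [k20 phl2 ph20 hb2]]] := perl l2 hl2.
rewrite !cmodM !cmodV !(cdual_scale hl1.1) !(cdual_scale hl2.1) !cmodM.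
set a1 := cmod (l1 (u, v)); set b1 := cmod (l1 (u', v')).
set a2 := cmod (l2 (u, v)); set b2 := cmod (l2 (u', v')).
have a1p : 0 < a1 by apply: cmod_gt0; apply: hl1.2; exact: Cp1.
have b1p : 0 < b1 by apply: cmod_gt0; apply: hl1.2; exact: Cp1.
have a2p : 0 < a2 by apply: cmod_gt0; apply: hl2.2; exact: Cp1.
have b2p : 0 < b2 by apply: cmod_gt0; apply: hl2.2; exact: Cp1.
have czp : 0 < cmod zz by exact: cmod_gt0.
have cwp : 0 < cmod ww by exact: cmod_gt0.
have cr : forall s t, P2 s -> P2 t -> phi1 s * phi2 t <= q * (phi1 t * phi2 s).
  move=> s t Ps Pt; have [a [b [a0 ab bq hb]]] := Pb s t Ps Pt.
  have [_ h1] := hb phi1 phl1 ph10; have [h2 _] := hb phi2 phl2 ph20.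
  apply: (cross_term _ _ _ _ _ _ _ _ (ph10 _ (Acone _ Pt)) (ph20 _ (Acone _ Pt)) a0 h1 h2 bq q0).
have T4 : (phi1 u + phi1 v) * (phi2 u' + phi2 v') <= q * ((phi1 u' + phi1 v') * (phi2 u + phi2 v)).
  by apply: four_terms; apply: cr.
have [bu1 bu1'] := hb1 u v Pu Pv; have [bp1 bp1'] := hb1 u' v' Pu' Pv'.
have [bu2 bu2'] := hb2 u v Pu Pv; have [bp2 bp2'] := hb2 u' v' Pu' Pv'.
have key0 := final_ratio _ _ _ _ _ _ _ _ _ _ _
  (mulr_ge0 (ltW k10) (ltW a1p)) (mulr_ge0 (ltW k20) (ltW b2p))
  (addr_ge0 (ph10 _ (Acone _ Pu)) (ph10 _ (Acone _ Pv))) q0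
  (addr_ge0 (ph10 _ (Acone _ Pu')) (ph10 _ (Acone _ Pv')))
  (addr_ge0 (ph20 _ (Acone _ Pu)) (ph20 _ (Acone _ Pv)))
  (mulr_ge0 (ltW c0) q0) bu1' bp2' T4 bp1 bu2.
have key : a1 * b2 <= M * (a2 * b1).
  have kk : 0 < k1 * k2 by rewrite mulr_gt0.
  rewrite -(ler_pM2l kk).
  have -> : k1 * k2 * (a1 * b2) = k1 * a1 * (k2 * b2) by ring.
  have -> : k1 * k2 * (M * (a2 * b1)) = (c * q) ^+ 2 * q * (k2 * a2 * (k1 * b1)) by rewrite /M; ring.
  exact: key0.
have -> : cmod zz * a1 * (cmod ww * b1)^-1 = (cmod zz / cmod ww) * (a1 / b1).
  by field; rewrite !gt_eqF.
have -> : M * (cmod zz * a2 * (cmod ww * b2)^-1) = (cmod zz / cmod ww) * (M * a2 / b2).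
  by field; rewrite !gt_eqF.
apply: ler_wpM2l; first by rewrite divr_ge0 // ltW.
rewrite ler_pdivrMr // mulrAC ler_pdivlMr //.
by rewrite -mulrA.
Qed.
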